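(* Fix an integer $d\ge 2$ and $\theta>0$. For the public goods game described in the context, with arbitrary real parameters $\mu_b,\mu_c,\sigma_b^2,\sigma_c^2,\sigma_{bc}$, we have $F>0$ if and only if $\sigma_{bc}-\sigma_c^2>2\mu_c$. In particular, this condition does not depend on $\theta$ or $d$. Moreover, $F$ is strictly decreasing in $\sigma_c^2$ and strictly increasing in $\sigma_{bc}$ when the other parameters are held fixed.
   Context: For integers $0\le k\le n$ and $\theta>0$ let $\psi_n^k=\frac{\prod_{i=1}^{k}(\theta+i-1)\prod_{j=1}^{n-k}(\theta+j-1)}{\prod_{l=1}^{n}(2\theta+l-1)}$ (empty products equal $1$). For real arrays $\mu_{C,k},\mu_{D,k},\sigma_{CC,kl},\sigma_{CD,kl},\sigma_{DD,kl}$ ($k,l=0,\ldots,d-1$) define $$F=\sum_{k=0}^{d-1}\binom{d-1}{k}\psi_{d+1}^{k+1}(\mu_{C,k}-\mu_{D,k})+\sum_{k,l=0}^{d-1}\binom{d-1}{k}\binom{d-1}{l}\Big[-\psi_{2d+1}^{k+l+2}(\sigma_{CC,kl}-\sigma_{CD,kl})+\psi_{2d+1}^{k+l+1}(\sigma_{DD,kl}-\sigma_{CD,kl})\Big].$$ Here $\mu_{C,k},\mu_{D,k}$ are the scaled means of the payoffs $a_k$ to a cooperator and $b_k$ to a defector having $k$ cooperating partners among $d-1$ in a group of size $d$, and $\sigma_{CC,kl},\sigma_{CD,kl},\sigma_{DD,kl}$ are the scaled second moments of $a_ka_l$, $a_kb_l$, $b_kb_l$ (each such expectation equals the scaled quantity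 times $\delta$ plus $o(\delta)$). In the paper's large-population weak-selection approximation, the average abundance of $C$ is $\tfrac12+\tfrac{\delta(1-u)}{u}F$, so weak selection favors the abundance of $C$ iff $F>0$. Public goods game: with random benefit $b$ and cost $c$ satisfying $E[b]=\mu_b\delta+o(\delta)$, $E[c]=\mu_c\delta+o(\delta)$, $E[b^2]=\sigma_b^2\delta+o(\delta)$, $E[c^2]=\sigma_c^2\delta+o(\delta)$, $E[bc]=\sigma_{bc}\delta+o(\delta)$, the payoffs are $a_k=\frac{k}{d-1}b-c$ and $b_k=\frac{k}{d-1}b$. Hence $\mu_{C,k}=\frac{k}{d-1}\mu_b-\mu_c$, $\mu_{D,k}=\frac{k}{d-1}\mu_b$, $\sigma_{CC,kl}=\frac{kl}{(d-1)^2}\sigma_b^2+\sigma_c^2-\frac{k+l}{d-1}\sigma_{bc}$, $\sigma_{CD,kl}=\frac{kl}{(d-1)^2}\sigma_b^2-\frac{l}{d-1}\sigma_{bc}$, $\sigma_{DD,kl}=\frac{kl}{(d-1)^2}\sigma_b^2$. *)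

(* Defs.v *)
From mathcomp Require Import all_boot all_order all_algebra.
Set Implicit Arguments. Unset Strict Implicit. Unset Printing Implicit Defensive.
Import Order.TTheory GRing.Theory Num.Theory.
Local Open Scope ring_scope.

Definition psi {R : realFieldType} (th : R) (n k : nat) : R :=
  (\prod_(1 <= i < k.+1) (th + i%:R - 1)) *
  (\prod_(1 <= j < (n - k).+1) (th + j%:R - 1)) /
  (\prod_(1 <= l < n.+1) (2 * th + l%:R - 1)).

Definition Fgen {R : realFieldType} (th : R) (d : nat)
  (muC muD : nat -> R) (sCC sCD sDD : nat -> nat -> R) : R :=
  \sum_(0 <= k < d) ('C(d.-1, k))%:R * psi th d.+1 k.+1 * (muC k - muD k)
  + \sum_(0 <= k < d) \sum_(0 <= l < d)
      ('C(d.-1, k))%:R * ('C(d.-1, l))%:R *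
      (- psi th (2 * d).+1 (k + l).+2 * (sCC k l - sCD k l)
       + psi th (2 * d).+1 (k + l).+1 * (sDD k l - sCD k l)).

Section PGG.
Context {R : realFieldType} (d : nat) (mub muc sb2 sc2 sbc : R).
Definition pgg_muC (k : nat) : R := k%:R / (d.-1)%:R * mub - muc.
Definition pgg_muD (k : nat) : R := k%:R / (d.-1)%:R * mub.
Definition pgg_sCC (k l : nat) : R :=
  (k * l)%:R / ((d.-1)%:R ^+ 2) * sb2 + sc2 - (k + l)%:R / (d.-1)%:R * sbc.
Definition pgg_sCD (k l : nat) : R :=
  (k * l)%:R / ((d.-1)%:R ^+ 2) * sb2 - l%:R / (d.-1)%:R * sbc.
Definition pgg_sDD (k l : nat) : R :=
  (k * l)%:R / ((d.-1)%:R ^+ 2) * sb2.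
End PGG.

Definition F_pgg {R : realFieldType} (th : R) (d : nat)
  (mub muc sb2 sc2 sbc : R) : R :=
  Fgen th d (pgg_muC d mub muc) (pgg_muD d mub)
    (pgg_sCC d sb2 sc2 sbc) (pgg_sCD d sb2 sbc) (pgg_sDD d sb2).

(* Main.v *)
Require Import Defs.
From mathcomp Require Import all_boot all_order all_algebra.
From mathcomp Require Import ring lra zify.
Import Order.TTheory GRing.Theory Num.Theory.
Local Open Scope ring_scope.

Definition G {R : realFieldType} (th : R) (a b : nat) : R :=
  (\prod_(1 <= i < a.+1) (th + i%:R - 1)) *
  (\prod_(1 <= j < b.+1) (th + j%:R - 1)) /
  (\prod_(1 <= l < (a + b).+1) (2 * th + l%:R - 1)).

Lemma psi_G {R : realFieldType} (th : R) N K : (K <= N)%N -> psi th N K = G th K (N - K).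
Proof. by move=> h; rewrite /psi /G subnKC. Qed.

Lemma den_pos {R : realFieldType} (th : R) n : 0 < th ->
  0 < \prod_(1 <= l < n.+1) (2 * th + l%:R - 1).
Proof.
move=> th0; rewrite big_nat_cond; apply: prodr_gt0 => i /andP[/andP[h1 _] _].
have : 1 <= i%:R :> R by rewrite ler1n. lra.
Qed.

Lemma GS {R : realFieldType} (th : R) a b : 0 < th ->
  G th a b = G th a.+1 b + G th a b.+1.
Proof.
move=> th0; rewrite /G addSn addnS.
rewrite (big_nat_recr a.+1) // (big_nat_recr b.+1) // (big_nat_recr (a+b)%N.+1) //=.
have h1 := den_pos th (a+b)%N th0.
move: h1; set D := \prod_(1 <= l < (a+b).+1) _ => h1.
set P := \prod_(1 <= l < a.+1) _. set Q := \prod_(1 <= l < b.+1) _.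
have ha : 0 <= a%:R :> R by rewrite ler0n.
have hb : 0 <= b%:R :> R by rewrite ler0n.
rewrite -!natr1 natrD. field.
apply/andP; split; last exact: lt0r_neq0.
rewrite gt_eqF //; lra.
Qed.

Lemma coll {R : realFieldType} (th : R) m : 0 < th -> forall a b,
  \sum_(0 <= k < m.+1) ('C(m, k))%:R * G th (a + k) (b + (m - k)) = G th a b.
Proof.
move=> th0; elim: m => [|m IH] a b.
  by rewrite big_nat1 bin0 addn0 subnn addn0 mul1r.
rewrite big_nat_recl //.
under eq_bigr => k _ do rewrite binS natrD mulrDl.
rewrite big_split /=.
have E1 : \sum_(0 <= i < m.+1) ('C(m, i))%:R * G th (a + i.+1) (b + (m.+1 - i.+1))
   = G th a.+1 b.
  rewrite -[RHS](IH a.+1 b); apply: eq_bigr => k _.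
  by rewrite subSS addnS addSn.
rewrite E1 (GS th a b th0) addrA addrC; congr (_ + _).
rewrite -(IH a b.+1) big_nat_recr //= (bin_small (ltnSn m)) mul0r addr0.
rewrite (big_nat_recl m) // bin0 !addn0 !subn0 bin0 addnS addSn.
congr (_ + _); apply: eq_big_nat => k /andP[_ hk].
by congr (_ * G th _ _); lia.
Qed.

Lemma wcoll {R : realFieldType} (th : R) m : 0 < th -> forall a b,
  \sum_(0 <= k < m.+2) k%:R * ('C(m.+1, k))%:R * G th (a + k) (b + (m.+1 - k))
  = m.+1%:R * G th a.+1 b.
Proof.
move=> th0 a b; rewrite big_nat_recl // mulr0n !mul0r add0r.
rewrite -(coll th m th0 a.+1 b) mulr_sumr; apply: eq_bigr => k _.
rewrite mulrA -natrM -(mul_bin_diag m.+1 k) natrM /=.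
by rewrite subSS addnS addSn.
Qed.
Lemma Gsym {R : realFieldType} (th : R) a b : G th a b = G th b a.
Proof. by rewrite /G; congr (_ / _); [exact: mulrC | rewrite addnC]. Qed.

Lemma S1 {R : realFieldType} (th : R) m mub muc : 0 < th ->
  \sum_(0 <= k < m.+2)
     'C(m.+1, k)%:R * psi th m.+3 k.+1 *
     (pgg_muC m.+2 mub muc k - pgg_muD m.+2 mub k) = - muc * G th 1 1.
Proof.
move=> th0; rewrite -(coll th m.+1 th0 1 1) mulr_sumr.
apply: eq_big_nat => k /andP[_ hk].
rewrite psi_G; last by lia.
have -> : (m.+3 - k.+1 = 1 + (m.+1 - k))%N by lia.
rewrite add1n /pgg_muC /pgg_muD; ring.
Qed.

Lemma inner {R : realFieldType} (th : R) m sb2 sc2 sbc k : 0 < th -> (k <= m.+1)%N ->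
  \sum_(0 <= l < m.+2)
        'C(m.+1, k)%:R * 'C(m.+1, l)%:R *
        (- psi th (2 * m.+2).+1 (k + l).+2 *
         (pgg_sCC m.+2 sb2 sc2 sbc k l - pgg_sCD m.+2 sb2 sbc k l) +
         psi th (2 * m.+2).+1 (k + l).+1 *
         (pgg_sDD m.+2 sb2 k l - pgg_sCD m.+2 sb2 sbc k l))
  = 'C(m.+1, k)%:R * ((sbc * k%:R / m.+1%:R - sc2) * G th k.+2 (m.+1 - k).+1
       + sbc / m.+1%:R * (m.+1%:R * G th k.+2 (m.+1 - k).+2)).
Proof.
move=> th0 hk.
rewrite -(coll th m.+1 th0 k.+2 (m.+1 - k).+1).
rewrite -(wcoll th m th0 k.+1 (m.+1 - k).+2).
rewrite !mulr_sumr -big_split /= mulr_sumr.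
apply: eq_big_nat => l /andP[_ hl].
rewrite !psi_G; try lia.
have -> : ((2 * m.+2).+1 - (k + l).+2 = (m.+1 - k).+1 + (m.+1 - l))%N by lia.
have -> : ((2 * m.+2).+1 - (k + l).+1 = (m.+1 - k).+2 + (m.+1 - l))%N by lia.
have -> : ((k + l).+2 = k.+2 + l)%N by lia.
have -> : ((k + l).+1 = k.+1 + l)%N by lia.
rewrite /pgg_sCC /pgg_sCD /pgg_sDD /= natrD; ring.
Qed.

Lemma outer {R : realFieldType} (th : R) m sc2 sbc : 0 < th ->
  \sum_(0 <= k < m.+2) 'C(m.+1, k)%:R * ((sbc * k%:R / m.+1%:R - sc2) * G th k.+2 (m.+1 - k).+1
       + sbc / m.+1%:R * (m.+1%:R * G th k.+2 (m.+1 - k).+2))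
  = (sbc - sc2) * G th 2 1.
Proof.
move=> th0.
have n0 : m.+1%:R != 0 :> R by rewrite pnatr_eq0.
have n1 : 1 + m%:R != 0 :> R.
  have : 0 <= m%:R :> R := ler0n _ _. by move=> h; apply/negP => /eqP; lra.
have e : (sbc - sc2) * G th 2 1 = - sc2 * G th 2 1 + sbc / m.+1%:R * (m.+1%:R * G th 3 1)
          + sbc * G th 2 2.
  rewrite (GS th 2 1 th0); field; exact: n1.
rewrite e -(coll th m.+1 th0 2 1) -(coll th m.+1 th0 2 2) -(wcoll th m th0 2 1).
rewrite !mulr_sumr -!big_split /=.
apply: eq_big_nat => k /andP[_ hk].
have -> : forall x y, G th (2 + x) (1 + y) = G th x.+2 y.+1 by [].
have -> : forall x y, G th (2 + x) (2 + y) = G th x.+2 y.+2 by [].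
field; exact: n1.
Qed.

Lemma Fval {R : realFieldType} (th : R) m mub muc sb2 sc2 sbc : 0 < th ->
  F_pgg th m.+2 mub muc sb2 sc2 sbc = G th 2 1 * (sbc - sc2 - 2 * muc).
Proof.
move=> th0; rewrite /F_pgg /Fgen /= S1 //.
under eq_big_nat => k /andP[_ hk] do rewrite (inner th m sb2 sc2 sbc k th0 hk).
rewrite outer // (GS th 1 1 th0) (Gsym th 1 2). ring.
Qed.

Lemma Gpos {R : realFieldType} (th : R) a b : 0 < th -> 0 < G th a b.
Proof.
move=> th0; rewrite /G divr_gt0 ?den_pos // mulr_gt0 //;
  rewrite big_nat_cond; apply: prodr_gt0 => i /andP[/andP[h1 _] _];
  have : 1 <= i%:R :> R by rewrite ler1n.
all: lra.
Qed.

Theorem mainTheorem3 (R : realFieldType) (d : nat) (th : R) :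
  (2 <= d)%N -> 0 < th ->
  (forall mub muc sb2 sc2 sbc : R,
     0 < F_pgg th d mub muc sb2 sc2 sbc <-> 2 * muc < sbc - sc2)
  /\ (forall mub muc sb2 sbc s1 s2 : R, s1 < s2 ->
        F_pgg th d mub muc sb2 s2 sbc < F_pgg th d mub muc sb2 s1 sbc)
  /\ (forall mub muc sb2 sc2 s1 s2 : R, s1 < s2 ->
        F_pgg th d mub muc sb2 sc2 s1 < F_pgg th d mub muc sb2 sc2 s2).
Proof.
case: d => [|[|m]] // _ th0; have c0 := Gpos th 2 1 th0.
split; [|split].
- by move=> *; rewrite Fval // pmulr_rgt0 // subr_gt0.
- by move=> *; rewrite !Fval //; nra.
- by move=> *; rewrite !Fval //; nra.
Qed.
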